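(* An $L$-topological space $X$ is a strictly injective $T_0$ $L$-topological space if and only if $X$ is $L$-sober.
   Context: $L$ is a frame. An $L$-topology on $X$ is $\mathcal O(X)\subseteq L^X$ closed under finite meets and arbitrary joins containing all constant maps $a_X$; $f$ continuous if $f^\leftarrow(B)=B\circ f$ is open for all open $B$. $T_0$: $A(x)=A(y)$ for all open $A$ implies $x=y$. A map $f:Y\to Z$ is a quasihomeomorphism if $f^\leftarrow:\mathcal O(Z)\to\mathcal O(Y)$ is a bijection; a subspace embedding if it is injective and $\mathcal O(Y)=\{B\circ f:B\in\mathcal O(Z)\}$; a strict embedding if it is both. A $T_0$ space $X$ is strictly injective if for every strict embedding $j:Y\to Z$ between $T_0$ $L$-topological spaces and every continuous $f:Y\to X$ there is a continuous $g:Z\to X$ with $g\circ j=f$. A point of $\mathcal O(X)$ is $p:\mathcal O(X)\to L$ preserving binary meets and arbitrary joins with $p(\lambda_X)=\lambda$; $[x](A)=A(x)$; $X$ is $L$-sober if $x\mapsto[x]$ is a bijection from $X$ onto the set of points of $\mathcal O(X)$. *)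

(* Defs.v *)
Record frame := Frame {
  fcar :> Type;
  fle : fcar -> fcar -> Prop;
  fle_refl : forall a, fle a a;
  fle_trans : forall a b c, fle a b -> fle b c -> fle a c;
  fle_antisym : forall a b, fle a b -> fle b a -> a = b;
  fsup : (fcar -> Prop) -> fcar;
  fsup_ub : forall (S : fcar -> Prop) a, S a -> fle a (fsup S);
  fsup_least : forall (S : fcar -> Prop) b,
      (forall a, S a -> fle a b) -> fle (fsup S) b;
  fmeet : fcar -> fcar -> fcar;
  fmeet_lb_l : forall a b, fle (fmeet a b) a;
  fmeet_lb_r : forall a b, fle (fmeet a b) b;
  fmeet_glb : forall a b c, fle c a -> fle c b -> fle c (fmeet a b);
  fmeet_distr : forall a (S : fcar -> Prop),
      fmeet a (fsup S) = fsup (fun b => exists s, S s /\ b = fmeet a s)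
}.

Arguments fle {L} : rename.
Arguments fsup {L} : rename.
Arguments fmeet {L} : rename.

Section LTop.
Variable L : frame.

Definition pmeet {X : Type} (A B : X -> L) : X -> L := fun x => fmeet (A x) (B x).

Definition pjoin {X : Type} (S : (X -> L) -> Prop) : X -> L :=
  fun x => fsup (fun a => exists A, S A /\ a = A x).

(* An L-topological space: a set X with O(X) ⊆ L^X closed under finite meets
   (binary meets; the empty meet is the constant top, a constant map) and
   arbitrary joins, and containing all constant maps. *)
Record ltop := LTopSpace {
  lpt :> Type;
  lopen : (lpt -> L) -> Prop;
  lopen_meet : forall A B, lopen A -> lopen B -> lopen (pmeet A B);
  lopen_join : forall S : (lpt -> L) -> Prop,
      (forall A, S A -> lopen A) -> lopen (pjoin S);
  lopen_const : forall a : L, lopen (fun _ => a)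
}.

Definition lcontinuous (X Y : ltop) (f : X -> Y) : Prop :=
  forall B : Y -> L, lopen Y B -> lopen X (fun x => B (f x)).

Definition T0 (X : ltop) : Prop :=
  forall x y : X, (forall A, lopen X A -> A x = A y) -> x = y.

(* quasihomeomorphism: f^<- : O(Z) -> O(Y) is (well defined, i.e. f continuous)
   a bijection *)
Definition quasihomeomorphism (Y Z : ltop) (f : Y -> Z) : Prop :=
  lcontinuous Y Z f /\
  (forall B1 B2 : Z -> L, lopen Z B1 -> lopen Z B2 ->
      (fun y => B1 (f y)) = (fun y => B2 (f y)) -> B1 = B2) /\
  (forall A : Y -> L, lopen Y A -> exists B, lopen Z B /\ A = (fun y => B (f y))).

Definition subspace_embedding (Y Z : ltop) (f : Y -> Z) : Prop :=
  (forall y1 y2, f y1 = f y2 -> y1 = y2) /\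
  (forall A : Y -> L, lopen Y A <-> exists B, lopen Z B /\ A = (fun y => B (f y))).

Definition strict_embedding (Y Z : ltop) (f : Y -> Z) : Prop :=
  quasihomeomorphism Y Z f /\ subspace_embedding Y Z f.

Definition strictly_injective (X : ltop) : Prop :=
  T0 X /\
  forall (Y Z : ltop) (j : Y -> Z) (f : Y -> X),
    T0 Y -> T0 Z -> strict_embedding Y Z j -> lcontinuous Y X f ->
    exists g : Z -> X, lcontinuous Z X g /\ forall y, g (j y) = f y.

Definition Opens (X : ltop) : Type := { A : X -> L | lopen X A }.

Definition is_point (X : ltop) (p : Opens X -> L) : Prop :=
  (forall A B C : Opens X,
      proj1_sig C = pmeet (proj1_sig A) (proj1_sig B) ->
      p C = fmeet (p A) (p B)) /\
  (forall (S : Opens X -> Prop) (C : Opens X),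
      proj1_sig C = pjoin (fun A => exists U, S U /\ A = proj1_sig U) ->
      p C = fsup (fun a => exists U, S U /\ a = p U)) /\
  (forall (lam : L) (C : Opens X), proj1_sig C = (fun _ => lam) -> p C = lam).

Definition eval_point (X : ltop) (x : X) : Opens X -> L :=
  fun A => proj1_sig A x.

Definition lsober (X : ltop) : Prop :=
  (forall x : X, is_point X (eval_point X x)) /\
  (forall x y : X, eval_point X x = eval_point X y -> x = y) /\
  (forall p, is_point X p -> exists x : X, eval_point X x = p).

End LTop.

(* Main.v *)
Require Import Defs.
From Stdlib Require Import FunctionalExtensionality ProofIrrelevance ClassicalEpsilon.

Lemma sup_ext (L : frame) (P Q : L -> Prop) :
  (forall a, P a <-> Q a) -> fsup P = fsup Q.
Proof.
  intro H. apply fle_antisym; apply fsup_least; intros a Ha;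
  apply fsup_ub; apply H; exact Ha.
Qed.

Lemma sig_eq_pi {A : Type} {P : A -> Prop} (u v : {x | P x}) :
  proj1_sig u = proj1_sig v -> u = v.
Proof.
  destruct u as [u pu], v as [v pv]; simpl; intro E; subst.
  f_equal; apply proof_irrelevance.
Qed.

Lemma eval_is_point (L : frame) (X : ltop L) (x : X) : is_point L X (eval_point L X x).
Proof.
  unfold eval_point; split; [|split].
  - intros A B C H. rewrite H. reflexivity.
  - intros S C H. rewrite H. unfold pjoin. apply sup_ext. intro a; split.
    + intros [A [[U [HU ->]] ->]]. exists U; auto.
    + intros [U [HU ->]]. exists (proj1_sig U). split; eauto.
  - intros lam C H. rewrite H. reflexivity.
Qed.

Lemma sober_T0 (L : frame) (X : ltop L) : lsober L X -> T0 L X.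
Proof.
  intros [_ [Hinj _]] x y H. apply Hinj. apply functional_extensionality.
  intros [U HU]. unfold eval_point; simpl. apply H; exact HU.
Qed.

Lemma sober_si (L : frame) (X : ltop L) : lsober L X -> strictly_injective L X.
Proof.
  intro Hs. split; [apply sober_T0; exact Hs|].
  destruct Hs as [Hpt [Hinj Hsurj]].
  intros Y Z j f _ _ [[Hjc [Huniq Hex]] _] Hf.
  assert (HB : forall U : Opens L X, {B : Z -> L | lopen L Z B /\
            (fun y => proj1_sig U (f y)) = (fun y => B (j y))}).
  { intro U. apply constructive_indefinite_description. apply Hex.
    apply Hf. apply proj2_sig. }
  set (Bf := fun U => proj1_sig (HB U)).
  assert (Bopen : forall U, lopen L Z (Bf U)).
  { intro U. unfold Bf. destruct (HB U) as [B [H1 H2]]. exact H1. }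
  assert (Beq : forall U, (fun y => proj1_sig U (f y)) = (fun y => Bf U (j y))).
  { intro U. unfold Bf. destruct (HB U) as [B [H1 H2]]. exact H2. }
  assert (Bkey : forall U B, lopen L Z B ->
            (fun y => proj1_sig U (f y)) = (fun y => B (j y)) -> Bf U = B).
  { intros U B HBo HBe. apply Huniq; auto. rewrite <- Beq. exact HBe. }
  assert (Hp : forall z, is_point L X (fun U => Bf U z)).
  { intro z. split; [|split].
    - intros A B C H.
      assert (E : Bf C = pmeet L (Bf A) (Bf B)).
      { apply Bkey. apply lopen_meet; auto.
        apply functional_extensionality; intro y. rewrite H. unfold pmeet.
        pose proof (equal_f (Beq A) y) as EA. pose proof (equal_f (Beq B) y) as EB.
        simpl in EA, EB. rewrite EA, EB. reflexivity. }
      rewrite E. reflexivity.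
    - intros S C H.
      set (T := fun B => exists U, S U /\ B = Bf U).
      assert (E : Bf C = pjoin L T).
      { apply Bkey. apply lopen_join. intros B [U [_ ->]]. auto.
        apply functional_extensionality; intro y. rewrite H. unfold pjoin.
        apply sup_ext. intro a; split.
        - intros [A [[U [HU ->]] ->]]. exists (Bf U). split.
          + exists U; auto.
          + pose proof (equal_f (Beq U) y) as EU. simpl in EU. rewrite EU. reflexivity.
        - intros [B [[U [HU ->]] ->]]. exists (proj1_sig U). split.
          + exists U; auto.
          + pose proof (equal_f (Beq U) y) as EU. simpl in EU. rewrite EU. reflexivity. }
      rewrite E. unfold pjoin. apply sup_ext. intro a; split.
      + intros [B [[U [HU ->]] ->]]. exists U; auto.
      + intros [U [HU ->]]. exists (Bf U). split; [exists U; auto|reflexivity].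
    - intros lam C H.
      assert (E : Bf C = fun _ => lam).
      { apply Bkey. apply lopen_const. rewrite H. reflexivity. }
      rewrite E. reflexivity. }
  assert (HG : forall z, {x : X | eval_point L X x = (fun U => Bf U z)}).
  { intro z. apply constructive_indefinite_description. apply Hsurj. apply Hp. }
  exists (fun z => proj1_sig (HG z)). split.
  - intros A HA.
    assert (E : (fun z => A (proj1_sig (HG z))) = Bf (exist _ A HA)).
    { apply functional_extensionality; intro z. destruct (HG z) as [x Hx]; simpl.
      change (A x) with (eval_point L X x (exist _ A HA)). rewrite Hx. reflexivity. }
    rewrite E. apply Bopen.
  - intro y. destruct (HG (j y)) as [x Hx]; simpl. apply Hinj. rewrite Hx.
    apply functional_extensionality; intro U. unfold eval_point.
    pose proof (equal_f (Beq U) y) as EU. simpl in EU. rewrite EU. reflexivity.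
Qed.

Section Sob.
Variable L : frame.
Variable X : ltop L.

Definition PtT := {p : Opens L X -> L | is_point L X p}.
Definition Phi (U : Opens L X) : PtT -> L := fun p => proj1_sig p U.
Definition PtOpen (B : PtT -> L) : Prop := exists U, B = Phi U.

Lemma pt_meet : forall A B, PtOpen A -> PtOpen B -> PtOpen (pmeet L A B).
Proof.
  intros A B [U HA] [V HB]; rewrite HA, HB.
  exists (exist _ (pmeet L (proj1_sig U) (proj1_sig V))
            (lopen_meet L X _ _ (proj2_sig U) (proj2_sig V))).
  apply functional_extensionality; intros [p Hp]. unfold Phi, pmeet; simpl.
  symmetry. apply (proj1 Hp). reflexivity.
Qed.

Lemma pt_join : forall S, (forall A, S A -> PtOpen A) -> PtOpen (pjoin L S).
Proof.
  intros S HS.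
  set (SA := fun A : X -> L => exists U : Opens L X, S (Phi U) /\ A = proj1_sig U).
  assert (HSA : forall A, SA A -> lopen L X A).
  { intros A [U [_ ->]]. apply proj2_sig. }
  exists (exist _ (pjoin L SA) (lopen_join L X SA HSA)).
  apply functional_extensionality; intros [p Hp]. unfold Phi; simpl.
  rewrite ((proj1 (proj2 Hp)) (fun U => S (Phi U))) by reflexivity.
  unfold pjoin. apply sup_ext. intro a; split.
  - intros [B [HB ->]]. destruct (HS B HB) as [U ->]. exists U.
    split; [exact HB|reflexivity].
  - intros [U [HU ->]]. exists (Phi U). split; [exact HU|reflexivity].
Qed.

Lemma pt_const : forall a : L, PtOpen (fun _ => a).
Proof.
  intro a. exists (exist _ (fun _ => a) (lopen_const L X a)).
  apply functional_extensionality; intros [p Hp]. unfold Phi; simpl.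
  symmetry. apply (proj2 (proj2 Hp)). reflexivity.
Qed.

Definition PtSp : ltop L := LTopSpace L PtT PtOpen pt_meet pt_join pt_const.

Definition jpt (x : X) : PtSp := exist _ (eval_point L X x) (eval_is_point L X x).

Lemma pt_T0 : T0 L PtSp.
Proof.
  intros p q H. apply sig_eq_pi. apply functional_extensionality; intro U.
  apply (H (Phi U)). exists U; reflexivity.
Qed.

Lemma Uext (U V : Opens L X) : proj1_sig U = proj1_sig V -> U = V.
Proof. apply sig_eq_pi. Qed.

Lemma jpt_strict : T0 L X -> strict_embedding L X PtSp jpt.
Proof.
  intro HT. split; [split; [|split]|split].
  - intros B [U ->]. exact (proj2_sig U).
  - intros B1 B2 [U ->] [V ->] E.
    assert (U = V) as -> ; [|reflexivity].
    apply Uext. exact E.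
  - intros A HA. exists (Phi (exist _ A HA)). split; [exists (exist _ A HA); reflexivity|].
    reflexivity.
  - intros y1 y2 E. apply HT. intros A HA.
    change (A y1) with (eval_point L X y1 (exist _ A HA)).
    change (A y2) with (eval_point L X y2 (exist _ A HA)).
    change (eval_point L X y1) with (proj1_sig (jpt y1)).
    change (eval_point L X y2) with (proj1_sig (jpt y2)).
    rewrite E. reflexivity.
  - intro A; split.
    + intro HA. exists (Phi (exist _ A HA)). split; [exists (exist _ A HA); reflexivity|].
      reflexivity.
    + intros [B [[U ->] ->]]. exact (proj2_sig U).
Qed.

Lemma si_sober : strictly_injective L X -> lsober L X.
Proof.
  intros [HT Hext].
  destruct (Hext X PtSp jpt (fun x => x) HT pt_T0 (jpt_strict HT)) as [g [Hg Hgj]].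
  { intros B HB. exact HB. }
  split; [|split].
  - apply eval_is_point.
  - intros x y E. apply HT. intros A HA.
    change (A x) with (eval_point L X x (exist _ A HA)).
    change (A y) with (eval_point L X y (exist _ A HA)).
    rewrite E. reflexivity.
  - intros p Hp. exists (g (exist _ p Hp)).
    apply functional_extensionality; intro U. unfold eval_point.
    destruct (Hg (proj1_sig U) (proj2_sig U)) as [V HV].
    assert (UV : U = V).
    { apply Uext. apply functional_extensionality; intro x.
      rewrite <- (Hgj x) at 1.
      change (proj1_sig U (g (jpt x))) with ((fun z => proj1_sig U (g z)) (jpt x)).
      rewrite HV. reflexivity. }
    change (proj1_sig U (g (exist _ p Hp))) with
      ((fun z => proj1_sig U (g z)) (exist _ p Hp : PtSp)).
    rewrite HV. unfold Phi; simpl. rewrite UV. reflexivity.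
Qed.

End Sob.

Theorem theorem3p12 (L : frame) (X : ltop L) :
  strictly_injective L X <-> lsober L X.
Proof.
  split.
  - apply si_sober.
  - apply sober_si.
Qed.
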